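(* Let $\mathcal{O}$ be an order in $B_p$. Let $\beta_1,\beta_2,\beta_3\in\mathcal{O}^T$ be linearly independent, and let $\alpha_1,\alpha_2,\alpha_3\in\mathcal{O}$ satisfy $2\alpha_i-\mathrm{Tr}(\alpha_i)=\beta_i$ and $\mathrm{Tr}(\alpha_i)\in\{0,1\}$ for each $i$. The following are equivalent: (a) $\beta_1,\beta_2,\beta_3$ attain the successive minima of $\mathcal{O}^T$. (b) $1,\alpha_1,\alpha_2,\alpha_3$ attain the successive minima of $\mathcal{O}$, and whenever $\mathrm{Tr}(\alpha_i)=0$ for some $i\in\{1,2,3\}$, every $\gamma\in\mathcal{O}$ with $N(\gamma)=N(\alpha_i)$ that is linearly independent from $1,\alpha_1,\dots,\alpha_{i-1}$ satisfies $\mathrm{Tr}(\gamma)=0$.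
   Context: $B_p$ is the quaternion algebra over $\mathbb{Q}$ ramified exactly at the prime $p$ and $\infty$, with canonical involution $\overline{x}$, reduced norm $N(x)=x\overline{x}$, reduced trace $\mathrm{Tr}(x)=x+\overline{x}$. The Gross lattice is $\mathcal{O}^T=\{2x-\mathrm{Tr}(x):x\in\mathcal{O}\}$. Both $\mathcal{O}$ (rank 4) and $\mathcal{O}^T$ (rank 3) carry the positive definite quadratic form $N$. For a lattice $\Lambda$ of rank $k$ with positive definite quadratic form $Q$, the $i$-th successive minimum is the minimum value $D_i$ such that the $\mathbb{Z}$-module generated by $\{v\in\Lambda:Q(v)\le D_i\}$ has rank at least $i$; a list $v_1,\dots,v_k$ attains the successive minima if it is linearly independent and $Q(v_i)=D_i$ for each $i$. *)

(* Defs.v *)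
From HB Require Import structures.
From mathcomp Require Import all_boot all_order all_algebra.
Set Implicit Arguments. Unset Strict Implicit. Unset Printing Implicit Defensive.
Import Order.TTheory GRing.Theory Num.Theory.
Local Open Scope ring_scope.

(** Quaternion algebra (a,b)_Q with Q-basis 1, i, j, k = ij,
    i^2 = a, j^2 = b, ij = -ji.  An element is its coordinate row vector
    (x0, x1, x2, x3) meaning x0 + x1 i + x2 j + x3 k. *)
Definition quat := 'rV[rat]_4.

Definition qc (x : quat) (n : nat) : rat := x ord0 (inord n).

Definition qmk (r0 r1 r2 r3 : rat) : quat :=
  \row_(k < 4) nth 0 [:: r0; r1; r2; r3] k.

Definition qone : quat := qmk 1 0 0 0.

Definition qmul (a b : rat) (x y : quat) : quat :=
  let x0 := qc x 0 in let x1 := qc x 1 in let x2 := qc x 2 in let x3 := qc x 3 in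
  let y0 := qc y 0 in let y1 := qc y 1 in let y2 := qc y 2 in let y3 := qc y 3 in
  qmk (x0 * y0 + a * x1 * y1 + b * x2 * y2 - a * b * x3 * y3)
      (x0 * y1 + x1 * y0 - b * x2 * y3 + b * x3 * y2)
      (x0 * y2 + x2 * y0 + a * x1 * y3 - a * x3 * y1)
      (x0 * y3 + x3 * y0 + x1 * y2 - x2 * y1).

Definition qconj (x : quat) : quat := qmk (qc x 0) (- qc x 1) (- qc x 2) (- qc x 3).

(** reduced norm N(x) = x * conj x and reduced trace Tr(x) = x + conj x;
    both are scalars (multiples of 1); we return the scalar. *)
Definition qnorm (a b : rat) (x : quat) : rat := qc (qmul a b x (qconj x)) 0.
Definition qtr (x : quat) : rat := qc (x + qconj x) 0.

(** Parameters (a,b) such that (a,b)_Q is the quaternion algebra B_p ramified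
    exactly at p and infinity (standard presentations, cf. Pizer). *)
Definition Bp_params (p : nat) (a b : rat) : Prop :=
  prime p /\
  [\/ [/\ p = 2%N, a = -1 & b = -1],
      [/\ (p %% 4 = 3)%N, a = -1 & b = - p%:R],
      [/\ (p %% 8 = 5)%N, a = -2 & b = - p%:R]
    | (p %% 8 = 1)%N /\
      exists q : nat, [/\ prime q, (q %% 4 = 3)%N, a = - q%:R, b = - p%:R
                        & ~ (exists x : nat, x ^ 2 = p %[mod q])]].

Definition is_order (a b : rat) (O : quat -> Prop) : Prop :=
  (exists E : 'M[rat]_4, E \in unitmx /\
     forall x : quat, O x <-> exists c : 'rV[int]_4, x = map_mx intr c *m E) /\
  O qone /\ (forall x y, O x -> O y -> O (qmul a b x y)).

Definition gross (O : quat -> Prop) (y : quat) : Prop :=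
  exists x, O x /\ y = 2%:R *: x - qtr x *: qone.

Definition rank_ge (L : quat -> Prop) (Q : quat -> rat) (D : rat) (i : nat) : Prop :=
  exists s : seq quat, [/\ size s = i, free s & forall v, v \in s -> L v /\ Q v <= D].

Definition succ_min (L : quat -> Prop) (Q : quat -> rat) (i : nat) (D : rat) : Prop :=
  rank_ge L Q D i /\ forall D', rank_ge L Q D' i -> D <= D'.

Definition attains (L : quat -> Prop) (Q : quat -> rat) (vs : seq quat) : Prop :=
  [/\ free vs, forall v, v \in vs -> L v &
      forall i : nat, (i < size vs)%N -> succ_min L Q i.+1 (Q (nth 0 vs i))].

(* Main.v *)
Require Import Defs.
From HB Require Import structures.
From mathcomp Require Import all_boot all_order all_algebra.
From mathcomp Require Import ring lra zify.
Import Order.TTheory GRing.Theory Num.Theory.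
Set Implicit Arguments. Unset Strict Implicit. Unset Printing Implicit Defensive.
Local Open Scope ring_scope.

Lemma qcE (x : quat) (i : 'I_4) : qc x i = x ord0 i.
Proof. by rewrite /qc inord_val. Qed.

Lemma qmk0 r0 r1 r2 r3 : qc (qmk r0 r1 r2 r3) 0 = r0.
Proof. by rewrite /qc /qmk mxE inordK. Qed.
Lemma qmk1 r0 r1 r2 r3 : qc (qmk r0 r1 r2 r3) 1 = r1.
Proof. by rewrite /qc /qmk mxE inordK. Qed.
Lemma qmk2 r0 r1 r2 r3 : qc (qmk r0 r1 r2 r3) 2 = r2.
Proof. by rewrite /qc /qmk mxE inordK. Qed.
Lemma qmk3 r0 r1 r2 r3 : qc (qmk r0 r1 r2 r3) 3 = r3.
Proof. by rewrite /qc /qmk mxE inordK. Qed.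

Lemma qcD x y n : qc (x + y) n = qc x n + qc y n.
Proof. by rewrite /qc mxE. Qed.
Lemma qcZ c x n : qc (c *: x) n = c * qc x n.
Proof. by rewrite /qc mxE. Qed.
Lemma qcN x n : qc (- x) n = - qc x n.
Proof. by rewrite /qc mxE. Qed.
Lemma qcB x y n : qc (x - y) n = qc x n - qc y n.
Proof. by rewrite qcD qcN. Qed.

Definition qcs := (qmk0, qmk1, qmk2, qmk3, qcD, qcZ, qcN, qcB).

Lemma qtrE x : qtr x = 2 * qc x 0.
Proof. rewrite /qtr /qconj qcD qmk0. ring. Qed.

Lemma qnormE a b x : qnorm a b x =
  qc x 0 ^+ 2 - a * qc x 1 ^+ 2 - b * qc x 2 ^+ 2 + a * b * qc x 3 ^+ 2.
Proof. rewrite /qnorm /qmul /qconj !qcs. ring. Qed.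

Lemma quat_ext (x y : quat) : (forall n, (n < 4)%N -> qc x n = qc y n) -> x = y.
Proof.
move=> H; apply/matrixP => i j; rewrite (ord1 i).
by have := H j (ltn_ord j); rewrite /qc inord_val.
Qed.

Lemma qone0 : qc qone 0 = 1. Proof. exact: qmk0. Qed.
Lemma qone1 : qc qone 1 = 0. Proof. exact: qmk1. Qed.
Lemma qone2 : qc qone 2 = 0. Proof. exact: qmk2. Qed.
Lemma qone3 : qc qone 3 = 0. Proof. exact: qmk3. Qed.

Definition qcs' := (qone0, qone1, qone2, qone3, qmk0, qmk1, qmk2, qmk3, qcD, qcZ, qcN, qcB).

Definition Rm (a b x0 x1 x2 x3 : rat) : 'M[rat]_4 :=
  \matrix_(i < 4, j < 4) nth 0 (nth [::] [:: [:: x0; x1; x2; x3];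
     [:: a * x1; x0; a * x3; x2]; [:: b * x2; - (b * x3); x0; - x1];
     [:: - (a * b * x3); b * x2; - (a * x1); x0]] i) j.

Lemma det_Rm a b x0 x1 x2 x3 : \det (Rm a b x0 x1 x2 x3) =
   (x0^+2 - a * x1^+2 - b * x2^+2 + a * b * x3^+2)^+2.
Proof.
rewrite (expand_det_row _ ord0) !big_ord_recl big_ord0.
rewrite /cofactor.
rewrite !(expand_det_row _ ord0) !big_ord_recl !big_ord0 /cofactor.
rewrite !(expand_det_row _ ord0) !big_ord_recl !big_ord0 /cofactor.
rewrite !det_mx11 !mxE /=.
ring.
Qed.

Definition Rq a b (x : quat) := Rm a b (qc x 0) (qc x 1) (qc x 2) (qc x 3).

Lemma Rq_mul a b (x y : quat) : y *m Rq a b x = qmul a b y x.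
Proof.
apply: quat_ext => n Hn.
rewrite /qmul.
have E : forall k, (k < 4)%N -> qc (y *m Rq a b x) k =
   \sum_(i < 4) qc y i * (Rq a b x) i (inord k).
  by move=> k Hk; rewrite /qc mxE; apply: eq_bigr => i _; rewrite inord_val.
rewrite E // !big_ord_recl big_ord0 /Rq /Rm !mxE /=.
case: n Hn => [|[|[|[|n]]]] // _.
all: rewrite !qcs' inordK //=.
all: change (bump 0 0) with 1%N; change (bump 0 1) with 2%N; change (bump 0 2) with 3%N; ring.
Qed.



Lemma det_int n (M : 'M[rat]_n) :
  (forall i j, M i j \is a Num.int) -> \det M \is a Num.int.
Proof.
move=> H; rewrite /determinant; apply: rpred_sum => s _.
apply: rpredM; first exact: rpred_sign.
by apply: rpred_prod => i _.
Qed.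

Lemma sq_int (q : rat) : q ^+ 2 \is a Num.int -> q \is a Num.int.
Proof.
case/intrP => z Hz.
rewrite Qint_def.
have Hn := numqE q.
set n := numq q in Hn *; set d := denq q in Hn *.
have dpos : 0 < d by apply: denq_gt0.
have E : n ^+ 2 = z * d ^+ 2.
  apply: (@intr_inj rat). rewrite intrM !expr2 !intrM Hn -Hz; ring.
have cop : coprime `|n| `|d| by apply: coprime_num_den.
have H1 : (`|d| %| `|n| ^ 2)%N.
  by rewrite -abszX E abszM abszX dvdn_mull // dvdn_exp.
have H2 : coprime `|d| (`|n| ^ 2) by rewrite coprimeXr // coprime_sym.
have H3 : `|d|%N = 1%N.
  by move: H2; rewrite /coprime (gcdn_idPl H1) => /eqP.
apply/eqP; have : d = `|d|%N :> int by rewrite gez0_abs // ltW.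
by rewrite H3.
Qed.

Section Ord.
Variables (a b : rat) (O : quat -> Prop).
Hypothesis HO : is_order a b O.

Lemma O_def : exists E : 'M[rat]_4, E \in unitmx /\
     forall x : quat, O x <-> exists c : 'rV[int]_4, x = map_mx intr c *m E.
Proof. by case: HO. Qed.

Lemma O_one : O qone. Proof. by case: HO => _ []. Qed.
Lemma O_mul x y : O x -> O y -> O (qmul a b x y). Proof. by case: HO => _ [] _; apply. Qed.

Lemma O_add x y : O x -> O y -> O (x + y).
Proof.
have [E [_ HE]] := O_def.
move=> /HE [c ->] /HE [c' ->]; apply/HE; exists (c + c').
by rewrite raddfD /= mulmxDl.
Qed.

Lemma O_zscale (z : int) x : O x -> O (z%:~R *: x).
Proof.
have [E [_ HE]] := O_def.
move=> /HE [c ->]; apply/HE; exists (z *: c).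
rewrite scalemxAl; congr (_ *m _); apply/matrixP => i j; rewrite !mxE.
by rewrite intrM.
Qed.

Lemma O_opp x : O x -> O (- x).
Proof. by move=> /(O_zscale (-1)); rewrite scaleN1r. Qed.

Lemma O_cst (z : int) x : O x -> O (x + z%:~R *: qone).
Proof. by move=> Ox; apply: O_add => //; apply: O_zscale; apply: O_one. Qed.

Lemma O_matint x : O x -> exists E : 'M[rat]_4, E \in unitmx /\
  forall i j, (E *m Rq a b x *m invmx E) i j \is a Num.int.
Proof.
have [E [EU HE]] := O_def.
move=> Ox; exists E; split => // i j.
have : O (qmul a b (row i E) x).
  apply: O_mul => //; apply/HE; exists (delta_mx 0 i).
  by rewrite map_delta_mx -rowE.
case/HE => c Hc.
have -> : (E *m Rq a b x *m invmx E) i j = (row i (E *m Rq a b x *m invmx E)) 0 j.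
  by rewrite !mxE.
by rewrite !row_mul Rq_mul Hc mulmxK // mxE intr_int.
Qed.

Lemma O_norm_int x : O x -> qnorm a b x \is a Num.int.
Proof.
move=> /O_matint [E [EU Hi]].
apply: sq_int.
have := det_int Hi.
rewrite !det_mulmx det_inv det_Rm -qnormE.
rewrite unitmxE in EU.
by rewrite mulrC mulrA mulVr // mul1r.
Qed.

Lemma qnormD1 x (c : rat) : qnorm a b (x + c *: qone) = qnorm a b x + c * qtr x + c ^+ 2.
Proof. rewrite !qnormE qtrE !qcs'; ring. Qed.

Lemma O_tr_int x : O x -> qtr x \is a Num.int.
Proof.
move=> Ox.
have H1 := O_norm_int Ox.
have H2 : O (x + 1%:~R *: qone) by apply: O_cst.
have := O_norm_int H2; rewrite qnormD1.
have -> : qnorm a b x + 1%:~R * qtr x + 1%:~R ^+ 2 = qtr x + (qnorm a b x + 1) by rewrite expr1n mul1r; ring.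
move=> H; have := rpredB H (rpredD H1 (rpred1 _)).
by rewrite addrK.
Qed.
End Ord.


Lemma subseq_free (s t : seq quat) : subseq s t -> free t -> free s.
Proof.
elim: t s => [|x t IH] s.
  by rewrite subseq0 => /eqP ->.
case: s => [|y s] /=; first by rewrite nil_free.
case: eqP => [-> Hs|_ Hs].
  rewrite !free_cons => /andP [Hx Ft]; rewrite (IH _ Hs Ft) andbT.
  apply: contra Hx; apply: subvP; apply: sub_span; exact: mem_subseq.
by rewrite free_cons => /andP [_ Ft]; apply: IH.
Qed.

Lemma sub_take (T : eqType) (s : seq T) i j : (i <= j)%N -> subseq (take i s) (take j s).
Proof.
move=> Hij; rewrite -(subnKC Hij) takeD.
exact: prefix_subseq.
Qed.

Lemma exch (u s : seq quat) : free u -> free s -> (size u < size s)%N ->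
  exists2 v, v \in s & free (rcons u v).
Proof.
move=> Fu Fs Hsz.
case: (boolP (has (fun v => free (rcons u v)) s)) => [/hasP [v Hv Hf] | Hn].
  by exists v.
exfalso.
have Hsub : {subset s <= <<u>>%VS}.
  move=> v Hv; have := hasPn Hn v Hv.
  have P : perm_eq (rcons u v) (v :: u) by rewrite -cats1 perm_catC.
  by rewrite (perm_free P) free_cons Fu andbT negbK.
have := dimvS (introT span_subvP Hsub).
move/eqP: Fs => ->; move/eqP: Fu => ->.
by rewrite leqNgt Hsz.
Qed.

Definition exmin (L : quat -> Prop) (Q : quat -> rat) (X : seq quat) :=
  forall j, (j < size X)%N -> forall v, L v -> free (rcons (take j X) v) ->
    Q (nth 0 X j) <= Q v.

Lemma mem_take_nth (X : seq quat) j w : w \in take j X ->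
  exists2 i, (i < j)%N /\ (i < size X)%N & w = nth 0 X i.
Proof.
case/(nthP 0) => i Hi <-.
have H1 : (i < j)%N /\ (i < size X)%N.
  move: Hi; rewrite size_take; case: (ltnP j (size X)) => H Hi; split => //; [exact: ltn_trans Hi H | exact: leq_trans Hi H].
by exists i => //; rewrite nth_take //; case: H1.
Qed.

Lemma attains_mono L Q X i j : attains L Q X -> (i <= j)%N -> (j < size X)%N ->
  Q (nth 0 X i) <= Q (nth 0 X j).
Proof.
case=> _ _ H Hij Hj.
have [[s [Hs Fs Hv]] _] := H j Hj.
have [_ Hmin] := H i (leq_ltn_trans Hij Hj).
apply: Hmin; exists (take i.+1 s); split.
- by rewrite size_takel // Hs.
- exact: subseq_free (take_subseq _ _) Fs.
- by move=> v /mem_take /Hv.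
Qed.

Lemma attains_exmin L Q X : attains L Q X -> exmin L Q X.
Proof.
move=> Hatt; have [FX LX H] := Hatt.
elim=> [|j IH] Hj v Lv Fv.
  move: Fv; rewrite take0 /= => Fv; have [_ Hm] := H 0%N Hj; apply: Hm.
  by exists [:: v]; split => // w; rewrite inE => /eqP ->.
rewrite leNgt; apply/negP => Hlt.
have Hc := attains_mono Hatt (leqnSn j) Hj.
set c := Q (nth 0 X j) in Hc *.
set d := Q (nth 0 X j.+1) in Hc Hlt *.
case: (ltrP c d) => Hcd.
  have [_ Hm] := H j.+1 Hj.
  have Hr : forall D, c <= D -> Q v <= D -> rank_ge L Q D j.+2.
    move=> D H1 H2; exists (rcons (take j.+1 X) v); split => //.
      by rewrite size_rcons size_takel // ltnW.
    move=> w; rewrite mem_rcons inE => /orP [/eqP -> //|].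
    case/mem_take_nth => i [Hi Hi'] ->; split; first by apply: LX; apply: mem_nth.
    apply: le_trans H1; apply: attains_mono Hatt _ _ => //.
    by apply: ltnW.
  case: (lerP c (Q v)) => Hv.
    have := Hm _ (Hr _ Hv (lexx _)); rewrite leNgt Hlt //.
  have := Hm _ (Hr _ (lexx _) (ltW Hv)); rewrite leNgt Hcd //.
have Fv' : free (rcons (take j X) v).
  apply: subseq_free Fv; rewrite -!cats1 cat_subseq //; exact: sub_take.
have := IH (ltnW Hj) v Lv Fv'; rewrite -/c => Hcv.
have : d < d by apply: (le_lt_trans Hcd); apply: (le_lt_trans Hcv Hlt).
by rewrite ltxx.
Qed.

Lemma exmin_attains L Q X : free X -> (forall v, v \in X -> L v) -> exmin L Q X ->
  attains L Q X.
Proof.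
move=> FX LX HE; split => // j Hj; split.
  exists (take j.+1 X); split.
  - by rewrite size_takel.
  - exact: subseq_free (take_subseq _ _) FX.
  move=> w /mem_take_nth [i [Hi Hi']] ->; split; first by apply: LX; apply: mem_nth.
  case: (ltnP i j) => Hij; last first.
    by have -> : i = j by apply/eqP; rewrite eqn_leq Hij -ltnS Hi.
  apply: HE => //; first by apply: LX; apply: mem_nth.
  apply: subseq_free FX.
  apply: subseq_trans (take_subseq X j.+1).
  rewrite (take_nth 0 Hj) -!cats1 cat_subseq //; apply: sub_take; exact: ltnW.
move=> D [s [Hs Fs Hsv]].
have Ft : free (take j X) by apply: subseq_free (take_subseq _ _) FX.
have Hsz : (size (take j X) < size s)%N by rewrite Hs size_takel // ltnW.
have [v Hv Fv] := exch Ft Fs Hsz.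
have [Lv Qv] := Hsv v Hv.
exact: le_trans (HE j Hj v Lv Fv) Qv.
Qed.


Definition phi (x : quat) : quat := 2%:R *: x - qtr x *: qone.

Lemma qc_phi0 x : qc (phi x) 0 = 0.
Proof. rewrite /phi !qcs' qtrE; ring. Qed.

Lemma span_phi0 T v : v \in <<map phi T>>%VS -> qc v 0 = 0.
Proof.
pose X := in_tuple (map phi T).
move=> Hv; have Hv' : v \in <<X>>%VS by [].
rewrite (coord_span Hv') /qc summxE big1 // => i _.
rewrite mxE; have : X`_i \in map phi T by apply: mem_nth; exact: ltn_ord.
by case/mapP => y _ ->; have := qc_phi0 y; rewrite /qc => ->; rewrite mulr0.
Qed.

Lemma free_phi T : free (map phi T) = free (qone :: T).
Proof.
have Hspan : <<qone :: map phi T>>%VS = <<qone :: T>>%VS.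
  apply/eqP; rewrite eqEsubv; apply/andP; split; apply/span_subvP => w;
    rewrite inE => /orP [/eqP -> | Hw]; try by apply: memv_span; apply: mem_head.
    case/mapP: Hw => y Hy ->; rewrite /phi; apply: memvB; apply: memvZ;
      apply: memv_span; by rewrite ?inE ?Hy ?orbT ?eqxx.
  have -> : w = 2%:R^-1 *: (phi w + qtr w *: qone).
    by rewrite /phi subrK scalerA mulVf ?scale1r // pnatr_eq0.
  apply: memvZ; apply: memvD.
    by apply: memv_span; rewrite inE; apply/orP; right; apply/mapP; exists w.
  by apply: memvZ; apply: memv_span; exact: mem_head.
have Hn : qone \notin <<map phi T>>%VS.
  apply/negP => /span_phi0; rewrite qone0 => /eqP; by rewrite oner_eq0.
have <- : free (qone :: map phi T) = free (map phi T) by rewrite free_cons Hn.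
by rewrite /free Hspan /= size_map.
Qed.

Lemma free_rcons_phi S w : free (rcons (qone :: S) w) = free (rcons (map phi S) (phi w)).
Proof. by rewrite -map_rcons free_phi. Qed.

Lemma qtr_shift x c : qtr (x + c *: qone) = qtr x + 2 * c.
Proof. rewrite !qtrE !qcs'; ring. Qed.



Lemma phi_shift x c : phi (x + c *: qone) = phi x.
Proof.
apply: quat_ext => n; case: n => [|[|[|[|n]]]] // _;
  rewrite /phi qtr_shift qtrE !qcs'; ring.
Qed.

Lemma phi_norm a b x : qnorm a b (phi x) = 4%:R * qnorm a b x - qtr x ^+ 2.
Proof. rewrite /phi !qnormE qtrE !qcs'; ring. Qed.

Lemma int_succ (x y : rat) : x \is a Num.int -> y \is a Num.int -> x < y -> x + 1 <= y.
Proof.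
move=> /intrP [m ->] /intrP [n ->]; rewrite ltr_int -[1]/(1%:~R) -intrD ler_int.
lia.
Qed.

Lemma Bp_neg p a b : Bp_params p a b -> a < 0 /\ b < 0.
Proof.
case=> pp; have p0 : (0 < p)%N by apply: prime_gt0.
have pn : - (p%:R : rat) < 0 by rewrite oppr_lt0 ltr0n.
case=> [[_ -> ->]|[_ -> ->]|[_ -> ->]|[_ [q [qp _ -> -> _]]]].
all: split; rewrite ?oppr_lt0 ?ltr0n ?prime_gt0 //.
Qed.

Lemma qnorm_pos a b x : a < 0 -> b < 0 -> x != 0 -> 0 < qnorm a b x.
Proof.
move=> ha hb Hx; rewrite qnormE.
have s0 := sqr_ge0 (qc x 0); have s1 := sqr_ge0 (qc x 1).
have s2 := sqr_ge0 (qc x 2); have s3 := sqr_ge0 (qc x 3).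
have t1 : 0 <= - a * qc x 1 ^+ 2 by apply: mulr_ge0 => //; lra.
have t2 : 0 <= - b * qc x 2 ^+ 2 by apply: mulr_ge0 => //; lra.
have ab : 0 < a * b by nra.
have t3 : 0 <= a * b * qc x 3 ^+ 2 by apply: mulr_ge0 => //; lra.
have pos : forall y : rat, y != 0 -> 0 < y ^+ 2.
  by move=> y Hy; rewrite lt_def sqrf_eq0 Hy sqr_ge0.
case: (eqVneq (qc x 0) 0) => h0; last by have := pos _ h0; lra.
case: (eqVneq (qc x 1) 0) => h1.
  case: (eqVneq (qc x 2) 0) => h2.
    case: (eqVneq (qc x 3) 0) => h3.
      exfalso; move/eqP: Hx; apply.
      apply: quat_ext => n; case: n => [|[|[|[|n]]]] // _;
        by rewrite ?h0 ?h1 ?h2 ?h3 /qc mxE.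
    have := pos _ h3 => h; have : 0 < a * b * qc x 3 ^+ 2.
      by apply: mulr_gt0.
    lra.
  have := pos _ h2 => h; have : 0 < - b * qc x 2 ^+ 2 by apply: mulr_gt0 => //; lra.
  lra.
have := pos _ h1 => h; have : 0 < - a * qc x 1 ^+ 2 by apply: mulr_gt0 => //; lra.
lra.
Qed.


Section Key.
Variables (a b : rat) (O : quat -> Prop).
Hypothesis HO : is_order a b O.
Notation N := (qnorm a b).

Lemma reduce w : O w -> exists w', [/\ O w', phi w' = phi w & qtr w' = 0 \/ qtr w' = 1].
Proof.
move=> Ow; have /intrP [z Hz] := O_tr_int HO Ow.
exists (w + (- (z %/ 2)%Z)%:~R *: qone); split.
- by apply: (O_cst HO).
- exact: phi_shift.
rewrite qtr_shift Hz.
have r0 : (0 <= (z %% 2)%Z) by apply: modz_ge0.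
have r1 : ((z %% 2)%Z < 2) by apply: ltz_pmod.
have E := divz_eq z 2.
have -> : z%:~R + 2 * (- (z %/ 2)%Z)%:~R = ((z %% 2)%Z)%:~R :> rat.
  move: E; set q := (z %/ 2)%Z; set r := (z %% 2)%Z => E.
  rewrite {1}E intrD intrM intrN; ring.
have : (z %% 2)%Z = 0 \/ (z %% 2)%Z = 1 by lia.
by case=> ->; [left|right].
Qed.

Definition Fr S w := free (rcons (qone :: S) w).

Lemma Fr_phi S w w' : phi w' = phi w -> Fr S w' = Fr S w.
Proof. by rewrite /Fr !free_rcons_phi => ->. Qed.

Definition ExT S al := forall w, O w -> Fr S w -> N (phi al) <= N (phi w).
Definition ExO S al := forall w, O w -> Fr S w -> N al <= N w.
Definition Cond S al := qtr al = 0 -> forall w, O w -> N w = N al -> Fr S w -> qtr w = 0.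

Lemma key S al : O al -> qtr al = 0 \/ qtr al = 1 ->
  ExT S al <-> ExO S al /\ Cond S al.
Proof.
move=> Oal Tal.
have Ial := O_norm_int HO Oal.
split.
  move=> H; split.
    move=> w Ow Fw; have := H w Ow Fw; rewrite !phi_norm => Hle.
    have Iw := O_norm_int HO Ow.
    rewrite leNgt; apply/negP => /(int_succ Iw Ial) Hs.
    have := sqr_ge0 (qtr w).
    by case: Tal => T; rewrite T in Hle; lra.
  move=> T0 w Ow Hn Fw; have := H w Ow Fw; rewrite !phi_norm Hn T0 => Hle.
  have : qtr w ^+ 2 <= 0 by lra.
  move=> Hs; have : qtr w ^+ 2 == 0 by rewrite eq_le Hs sqr_ge0.
  by rewrite sqrf_eq0 => /eqP.
case=> HE HC w Ow Fw.
have [w' [Ow' Pw Tw']] := reduce Ow.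
rewrite -Pw; rewrite -(Fr_phi S Pw) in Fw.
have Hle := HE w' Ow' Fw.
have Iw := O_norm_int HO Ow'.
rewrite !phi_norm.
case: (ltrP (N al) (N w')) => Hlt.
  have := int_succ Ial Iw Hlt.
  by case: Tal => ->; case: Tw' => ->; move=> *; lra.
have Heq : N w' = N al by apply/eqP; rewrite eq_le Hle Hlt.
case: Tal => T.
  have := HC T w' Ow' Heq Fw => ->; rewrite T Heq; lra.
rewrite T Heq; case: Tw' => ->; lra.
Qed.

End Key.


Section Conv.
Variables (a b : rat) (O : quat -> Prop).
Hypothesis HO : is_order a b O.
Notation N := (qnorm a b).

Lemma exminT_iff A : exmin (gross O) N (map phi A) <->
  forall j, (j < size A)%N -> ExT a b O (take j A) (nth 0 A j).
Proof.
split.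
  move=> H j Hj w Ow Fw.
  have Hj' : (j < size (map phi A))%N by rewrite size_map.
  have := H j Hj' (phi w).
  rewrite (nth_map 0) //; apply; first by exists w.
  by rewrite -map_take -map_rcons free_phi.
move=> H j Hj v [x [Ox ->]] Fv.
rewrite size_map in Hj; rewrite (nth_map 0) //.
apply: (H j Hj x Ox).
by rewrite /Fr free_rcons_phi map_take.
Qed.

Lemma qnorm_one : N qone = 1.
Proof. rewrite qnormE !qcs'; ring. Qed.

Lemma exminO_iff A : a < 0 -> b < 0 -> exmin O N (qone :: A) <->
  forall j, (j < size A)%N -> ExO a b O (take j A) (nth 0 A j).
Proof.
move=> ha hb; split.
  by move=> H j Hj w Ow Fw; apply: (H j.+1 Hj w Ow Fw).
move=> H [|j] Hj v Ov Fv; last by apply: (H j Hj v Ov Fv).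
rewrite /= qnorm_one.
move: Fv; rewrite take0 /= seq1_free => Hv.
have := int_succ (rpred0 _) (O_norm_int HO Ov) (qnorm_pos ha hb Hv).
by rewrite add0r.
Qed.

End Conv.

Unset Implicit Arguments.
Theorem lemma3p7 (p : nat) (a b : rat) (O : quat -> Prop)
  (b1 b2 b3 a1 a2 a3 : quat) :
  Bp_params p a b ->
  is_order a b O ->
  gross O b1 -> gross O b2 -> gross O b3 ->
  free [:: b1; b2; b3] ->
  O a1 -> O a2 -> O a3 ->
  2%:R *: a1 - qtr a1 *: qone = b1 ->
  2%:R *: a2 - qtr a2 *: qone = b2 ->
  2%:R *: a3 - qtr a3 *: qone = b3 ->
  (qtr a1 = 0 \/ qtr a1 = 1) ->
  (qtr a2 = 0 \/ qtr a2 = 1) ->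
  (qtr a3 = 0 \/ qtr a3 = 1) ->
  (attains (gross O) (qnorm a b) [:: b1; b2; b3] <->
   attains O (qnorm a b) [:: qone; a1; a2; a3] /\
   (forall i : nat, (i < 3)%N ->
      qtr (nth 0 [:: a1; a2; a3] i) = 0 ->
      forall g : quat, O g ->
        qnorm a b g = qnorm a b (nth 0 [:: a1; a2; a3] i) ->
        free (rcons (qone :: take i [:: a1; a2; a3]) g) ->
        qtr g = 0)).
Proof.
move=> Hp HO _ _ _ FB O1 O2 O3 E1 E2 E3 T1 T2 T3.
subst b1 b2 b3.
have [ha hb] := Bp_neg Hp.
set A := [:: a1; a2; a3].
change (attains (gross O) (qnorm a b) (map phi A) <->
   attains O (qnorm a b) (qone :: A) /\
   (forall i : nat, (i < 3)%N -> Cond a b O (take i A) (nth 0 A i))).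
have {}FB : free (map phi A) := FB.
have OA : forall v, v \in A -> O v.
  by move=> v; rewrite !inE => /orP [/eqP ->|/orP [/eqP ->|/eqP ->]].
have FA : free (qone :: A) by rewrite -free_phi.
have KEY : forall j, (j < 3)%N -> ExT a b O (take j A) (nth 0 A j) <->
    ExO a b O (take j A) (nth 0 A j) /\ Cond a b O (take j A) (nth 0 A j).
  move=> j Hj; apply: key => //.
  - by apply: OA; apply: mem_nth.
  - by case: j Hj => [|[|[|j]]].
split.
  move=> Hatt; have HE := (exminT_iff a b O A).1 (attains_exmin Hatt).
  split.
    apply: exmin_attains => //.
      by move=> v; rewrite inE => /orP [/eqP ->|/OA //]; apply: (O_one HO).
    apply/(exminO_iff HO A ha hb) => j Hj.
    exact: ((KEY j Hj).1 (HE j Hj)).1.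
  by move=> i Hi; exact: ((KEY i Hi).1 (HE i Hi)).2.
case=> Hatt HC.
apply: exmin_attains => //.
  by move=> v /mapP [x Hx ->]; exists x; split => //; apply: OA.
apply/(exminT_iff a b O A) => j Hj.
apply/(KEY j Hj); split; last exact: HC.
exact: ((exminO_iff HO A ha hb).1 (attains_exmin Hatt)) j Hj.
Qed.
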